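(* Let $P_{XY}$ be a probability distribution on $\mathcal X\times\mathcal Y$ (finite sets) with $X$-marginal $P_X$. For each $n$ let $\mathcal F_n^{P_X}=\{P_X^{\times n}\times Q_{Y^n}: Q_{Y^n}\in\mathcal P(\mathcal Y^n)\}$. Then for every $\varepsilon\in(0,1)$ the limit $\lim_{n\to\infty}\frac1n D_H^\varepsilon(\mathcal F_n^{P_X}\|P_{XY}^{\times n})$ exists and equals $U(X;Y)$. Equivalently, $$U(X;Y)=\mathrm{Stein}(\mathcal F^{P_X}\|P_{XY})=\mathrm{Stein}^\dagger(\mathcal F^{P_X}\|P_{XY}).$$
   Context: $D(P\|Q)=\sum_x P(x)\log\frac{P(x)}{Q(x)}$ (with $0\log(0/q)=0$; $+\infty$ if $P\not\ll Q$). The umlaut information is $U(X;Y)=\min_{Q_Y\in\mathcal P(\mathcal Y)}D(P_X\times Q_Y\|P_{XY})$. For a set $\mathcal F_n$ of distributions on a finite set $\mathcal Z$ (null hypothesis) and a distribution $R$ on $\mathcal Z$ (alternative), a test is a function $T:\mathcal Z\to[0,1]$ (probability of accepting the null); its type I error is $\sup_{Q\in\mathcal F_n}\sum_z Q(z)(1-T(z))$ and its type II error is $\sum_z R(z)T(z)$. $D_H^\varepsilon(\mathcal F_n\|R)=-\log\min\{\text{type II error}:\text{type I error}\le\varepsilon\}$. For $\mathcal F=(\mathcal F_n)_n$ with $\mathcal F_n$ on $\mathcal Z^n$: $\mathrm{Stein}(\mathcal F\|R)=\lim_{\varepsilon\to0}\liminf_{n}\frac1nD_H^\varepsilon(\mathcal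 F_n\|R^{\times n})$ and $\mathrm{Stein}^\dagger(\mathcal F\|R)=\lim_{\varepsilon\to1^-}\limsup_n\frac1nD_H^\varepsilon(\mathcal F_n\|R^{\times n})$. *)

(* Defs.v *)
From HB Require Import structures.
From mathcomp Require Import all_boot all_order all_algebra.
From mathcomp Require Import all_classical all_reals all_analysis.
Set Implicit Arguments. Unset Strict Implicit. Unset Printing Implicit Defensive.
Import Order.TTheory GRing.Theory Num.Theory.
Local Open Scope ring_scope.
Local Open Scope classical_set_scope.

Section Defs.
Variable R : realType.

Definition is_dist (T : finType) (P : {ffun T -> R}) : Prop :=
  (forall t, 0 <= P t) /\ \sum_(t : T) P t = 1.

Definition KL (T : finType) (P Q : {ffun T -> R}) : \bar R :=
  if `[< forall t, Q t = 0 -> P t = 0 >] then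
    (\sum_(t : T) (if P t == 0 then 0 else P t * ln (P t / Q t)))%:E
  else +oo%E.

Definition marginalX (X Y : finType) (PXY : {ffun X * Y -> R}) : {ffun X -> R} :=
  [ffun x => \sum_(y : Y) PXY (x, y)].

Definition prod_dist (X Y : finType) (PX : {ffun X -> R}) (QY : {ffun Y -> R})
  : {ffun X * Y -> R} := [ffun xy => PX xy.1 * QY xy.2].

Definition umlaut (X Y : finType) (PXY : {ffun X * Y -> R}) : \bar R :=
  ereal_inf [set KL (prod_dist (marginalX PXY) QY) PXY |
             QY in [set QY : {ffun Y -> R} | is_dist QY]].

Definition iid (Z : finType) (n : nat) (P : {ffun Z -> R}) : {ffun {ffun 'I_n -> Z} -> R} :=
  [ffun z : {ffun 'I_n -> Z} => \prod_(i < n) P (z i)].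

(* tests: functions Z -> [0,1] (probability of accepting the null) *)
Definition is_test (Z : finType) (T : {ffun Z -> R}) : Prop :=
  forall z, 0 <= T z <= 1.

Definition typeI (Z : finType) (F : set {ffun Z -> R}) (T : {ffun Z -> R}) : \bar R :=
  ereal_sup [set (\sum_(z : Z) Q z * (1 - T z))%:E | Q in F].

Definition typeII (Z : finType) (Ralt : {ffun Z -> R}) (T : {ffun Z -> R}) : R :=
  \sum_(z : Z) Ralt z * T z.

Definition DH (Z : finType) (eps : R) (F : set {ffun Z -> R}) (Ralt : {ffun Z -> R})
  : \bar R :=
  let beta := ereal_inf [set (typeII Ralt T)%:E |
                         T in [set T | is_test T /\ (typeI F T <= eps%:E)%E]] in
  (if beta == 0%E then +oo else - (ln (fine beta))%:E)%E.

Definition FPX (X Y : finType) (PX : {ffun X -> R}) (n : nat) : set {ffun {ffun 'I_n -> X * Y} -> R} :=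
  [set [ffun z : {ffun 'I_n -> X * Y} =>
          (\prod_(i < n) PX (z i).1) * QYn [ffun i => (z i).2]]
   | QYn in [set Q : {ffun {ffun 'I_n -> Y} -> R} | is_dist Q]].

End Defs.
Arguments FPX {R X} Y PX n.

(* Main.v *)
Require Import Defs.
From HB Require Import structures.
From mathcomp Require Import all_boot all_order all_algebra.
From mathcomp Require Import all_classical all_reals all_analysis.
From mathcomp Require Import ring lra.
Import Order.TTheory GRing.Theory Num.Theory.
Local Open Scope ring_scope.
Local Open Scope classical_set_scope.

Set Implicit Arguments. Unset Strict Implicit. Unset Printing Implicit Defensive.

Section ProdLemmas.
Variable R : realType.

Lemma sum_prod (A : finType) n (F : 'I_n -> A -> R) :
  \sum_(f : {ffun 'I_n -> A}) \prod_i F i (f i) = \prod_i \sum_a F i a.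
Proof. by rewrite bigA_distr_bigA. Qed.

Lemma prod_pick n (i : 'I_n) (F : 'I_n -> R) :
  \prod_k (if k == i then F k else 1) = F i.
Proof. by rewrite -big_mkcond /= big_pred1_eq. Qed.

Lemma E_prod (A : finType) n (p : A -> R) (phi : 'I_n -> A -> R) :
  \sum_(f : {ffun 'I_n -> A}) (\prod_i p (f i)) * (\prod_i phi i (f i)) =
  \prod_i \sum_a p a * phi i a.
Proof.
rewrite -sum_prod; apply: eq_bigr => f _; by rewrite big_split.
Qed.

Lemma E_pair (A : finType) n (p : A -> R) (h : 'I_n -> A -> R) (i j : 'I_n) :
  \sum_a p a = 1 -> (forall k, \sum_a p a * h k a = 0) ->
  \sum_(f : {ffun 'I_n -> A}) (\prod_k p (f k)) * (h i (f i) * h j (f j)) =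
  if i == j then \sum_a p a * (h i a * h i a) else 0.
Proof.
move=> p1 h0.
pose phi k a := (if k == i then h i a else 1) * (if k == j then h j a else 1).
have -> : \sum_(f : {ffun 'I_n -> A}) (\prod_k p (f k)) * (h i (f i) * h j (f j))
  = \sum_(f : {ffun 'I_n -> A}) (\prod_k p (f k)) * (\prod_k phi k (f k)).
  apply: eq_bigr => f _; congr (_ * _); rewrite /phi big_split /=.
  by rewrite (prod_pick i (fun k => h i (f k))) (prod_pick j (fun k => h j (f k))).
rewrite E_prod (bigD1 i) //= /phi eqxx.
case: (eqVneq i j) => [<-|nij].
  rewrite [X in _ * X]big1 ?mulr1 // => k /negbTE ->.
  by under eq_bigr do rewrite !mulr1; rewrite p1.
by under eq_bigr do rewrite mulr1; rewrite h0 mul0r.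
Qed.

Lemma sqr_sum n (a : 'I_n -> R) :
  (\sum_i a i) ^+ 2 = \sum_i \sum_j a i * a j.
Proof. by rewrite expr2 big_distrl; apply: eq_bigr => i _; rewrite big_distrr. Qed.

Lemma cheb (A : finType) n (p : A -> R) (h : 'I_n -> A -> R) (B t : R) :
  (forall a, 0 <= p a) -> \sum_a p a = 1 ->
  (forall k, \sum_a p a * h k a = 0) -> (forall k a, `|h k a| <= B) -> 0 < t ->
  \sum_(f : {ffun 'I_n -> A}) (\prod_k p (f k)) *
     (if t <= `|\sum_k h k (f k)| then 1 else 0) <= n%:R * B ^+ 2 / t ^+ 2.
Proof.
move=> p0 p1 h0 hB t0.
have w0 f : 0 <= \prod_k p (f k) by apply: prodr_ge0.
apply: (@le_trans _ _ (\sum_(f : {ffun 'I_n -> A}) (\prod_k p (f k)) *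
     ((\sum_k h k (f k)) ^+ 2 / t ^+ 2))).
  apply: ler_sum => f _; apply: ler_wpM2l => //.
  case: ifP => [ht|_]; last by rewrite divr_ge0 ?sqr_ge0 // exprn_ge0 // ltW.
  rewrite ler_pdivlMr ?exprn_gt0 // mul1r.
  move: ht; set s := \sum_k _ => ht.
  rewrite -(real_normK (num_real s)); set a := `|s| in ht *; nra.
under eq_bigr do rewrite mulrA.
rewrite -big_distrl /= ler_pM2r ?invr_gt0 ?exprn_gt0 //.
have -> : \sum_(f : {ffun 'I_n -> A}) (\prod_k p (f k)) * (\sum_k h k (f k)) ^+ 2
   = \sum_i \sum_j \sum_(f : {ffun 'I_n -> A}) (\prod_k p (f k)) * (h i (f i) * h j (f j)).
  under eq_bigr do rewrite sqr_sum big_distrr /=.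
  rewrite exchange_big /=; apply: eq_bigr => i _.
  under eq_bigr do rewrite big_distrr /=.
  by rewrite exchange_big.
under eq_bigr do under eq_bigr do rewrite E_pair // eq_sym.
under eq_bigr do rewrite -big_mkcond /= big_pred1_eq.
have -> : n%:R * B ^+ 2 = \sum_(i < n) B ^+ 2 by rewrite sumr_const card_ord mulr_natl.
apply: ler_sum => i _.
apply: (@le_trans _ _ (\sum_a p a * B ^+ 2)); last by rewrite -big_distrl /= p1 mul1r.
apply: ler_sum => a _; apply: ler_wpM2l => //.
have := hB i a; rewrite ler_norml => /andP[h1 h2]; nra.
Qed.

End ProdLemmas.

Set Implicit Arguments. Unset Strict Implicit. Unset Printing Implicit Defensive.

Section Basic.
Variables (R : realType) (X Y : finType) (PXY : {ffun X * Y -> R}).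
Hypothesis hP : is_dist PXY.
Let PX := marginalX PXY.

Lemma P_ge0 p : 0 <= PXY p. Proof. by case: hP. Qed.

Lemma PX_ge0 x : 0 <= PX x.
Proof. rewrite /PX /marginalX ffunE; apply: sumr_ge0 => y _; exact: P_ge0. Qed.

Lemma PX_sum1 : \sum_x PX x = 1.
Proof.
case: hP => _ <-; rewrite /PX /marginalX.
under eq_bigr do rewrite ffunE.
rewrite pair_bigA /=; apply: eq_bigr => -[x y] _ //.
Qed.

Lemma P_le_PX x y : PXY (x, y) <= PX x.
Proof.
rewrite /PX /marginalX ffunE (bigD1 y) //= lerDl.
by apply: sumr_ge0 => z _; exact: P_ge0.
Qed.

Definition inS (y : Y) : bool := [forall x, (PXY (x, y) == 0) ==> (PX x == 0)].

Definition Zf (M : R) (y : Y) (x : X) : R :=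
  if PXY (x, y) == 0 then M else ln (PX x / PXY (x, y)).

Definition gM (M : R) (y : Y) : R := \sum_x PX x * Zf M y x.

Definition M0 : R := \sum_(p : X * Y) (if PXY p == 0 then 0 else ln (PX p.1 / PXY p)).

Lemma lnr_ge0 x y : PXY (x, y) != 0 -> 0 <= ln (PX x / PXY (x, y)).
Proof.
move=> h; have hp : 0 < PXY (x, y) by rewrite lt0r h P_ge0.
by apply: ln_ge0; rewrite ler_pdivlMr // mul1r P_le_PX.
Qed.

Lemma M0_ge0 : 0 <= M0.
Proof.
apply: sumr_ge0 => -[x y] _; case: ifP => [//|/negbT h]; exact: lnr_ge0.
Qed.

Lemma Zf_ge0 M y x : 0 <= M -> 0 <= Zf M y x.
Proof. by rewrite /Zf; case: ifP => [//|/negbT h] _; exact: lnr_ge0. Qed.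

Lemma Zf_le M y x : M0 <= M -> Zf M y x <= M.
Proof.
rewrite /Zf; case: ifP => [//|/negbT h] hM; apply: le_trans hM.
rewrite /M0 (bigD1 (x, y)) //= (negbTE h) lerDl.
apply: sumr_ge0 => -[x' y'] _; case: ifP => [//|/negbT h']; exact: lnr_ge0.
Qed.

Lemma gM_ge0 M y : 0 <= M -> 0 <= gM M y.
Proof. move=> hM; apply: sumr_ge0 => x _; apply: mulr_ge0; [exact: PX_ge0|exact: Zf_ge0]. Qed.

Lemma gM_le M y : M0 <= M -> gM M y <= M.
Proof.
move=> hM; apply: (@le_trans _ _ (\sum_x PX x * M)).
  by apply: ler_sum => x _; apply: ler_wpM2l; [exact: PX_ge0|exact: Zf_le].
by rewrite -big_distrl /= PX_sum1 mul1r.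
Qed.

Lemma gS M y : inS y -> gM M y = gM 0 y.
Proof.
move=> /forallP hy; apply: eq_bigr => x _; rewrite /Zf.
case: ifP => // /eqP h; have := hy x; rewrite h eqxx /= => /eqP ->.
by rewrite !mul0r.
Qed.

Definition cmin : R := \prod_(x | 0 < PX x) PX x.

Lemma cmin_gt0 : 0 < cmin.
Proof. by apply: prodr_gt0 => x. Qed.

Lemma cmin_le x : 0 < PX x -> cmin <= PX x.
Proof.
move=> hx; rewrite /cmin (bigD1 x) //= ler_piMr ?PX_ge0 //.
apply: prodr_ile1 => z /andP[hz _]; rewrite ltW //=.
rewrite -PX_sum1 (bigD1 z) //= lerDl; apply: sumr_ge0 => w _; exact: PX_ge0.
Qed.

Lemma g_notS M y : ~~ inS y -> 0 <= M -> cmin * M <= gM M y.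
Proof.
move=> /forallPn[x]; rewrite negb_imply => /andP[/eqP h0 hx] hM.
have hx' : 0 < PX x by rewrite lt0r hx PX_ge0.
rewrite /gM (bigD1 x) //= /Zf h0 eqxx.
apply: (@le_trans _ _ (PX x * M)); first by rewrite ler_wpM2r // cmin_le.
rewrite lerDl; apply: sumr_ge0 => z _; apply: mulr_ge0; [exact: PX_ge0|exact: Zf_ge0].
Qed.

End Basic.

Set Implicit Arguments. Unset Strict Implicit. Unset Printing Implicit Defensive.

Section Zip.
Variables (R : realType) (X Y : finType) (n : nat).

Definition zp (x : {ffun 'I_n -> X}) (y : {ffun 'I_n -> Y}) : {ffun 'I_n -> X * Y} :=
  [ffun i => (x i, y i)].

Lemma sum_zip (F : {ffun 'I_n -> X * Y} -> R) :
  \sum_z F z = \sum_(x : {ffun 'I_n -> X}) \sum_(y : {ffun 'I_n -> Y}) F (zp x y).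
Proof.
rewrite pair_bigA /=.
rewrite (reindex (fun p : {ffun 'I_n -> X} * {ffun 'I_n -> Y} => zp p.1 p.2)) //=.
exists (fun z : {ffun 'I_n -> X * Y} => ([ffun i => (z i).1], [ffun i => (z i).2])).
  by move=> [x y] _ /=; congr (_, _); apply/ffunP => i; rewrite !ffunE.
by move=> z _; apply/ffunP => i; rewrite !ffunE /= -surjective_pairing.
Qed.

Lemma zp2 x y : [ffun i => (zp x y i).2] = y.
Proof. by apply/ffunP => i; rewrite !ffunE. Qed.

Lemma zp1 x y i : (zp x y i).1 = x i.
Proof. by rewrite ffunE. Qed.

Lemma typeI_Q (PX : {ffun X -> R}) (QYn : {ffun {ffun 'I_n -> Y} -> R})
  (T : {ffun {ffun 'I_n -> X * Y} -> R}) :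
  \sum_z ([ffun z : {ffun 'I_n -> X * Y} =>
          (\prod_(i < n) PX (z i).1) * QYn [ffun i => (z i).2]] z) * (1 - T z)
  = \sum_(y : {ffun 'I_n -> Y}) QYn y *
      \sum_(x : {ffun 'I_n -> X}) (\prod_i PX (x i)) * (1 - T (zp x y)).
Proof.
rewrite sum_zip exchange_big /=; apply: eq_bigr => y _.
rewrite big_distrr /=; apply: eq_bigr => x _.
rewrite ffunE zp2; under eq_bigr do rewrite zp1.
by rewrite mulrA [_ * QYn y]mulrC.
Qed.

Lemma typeII_eq (P : {ffun X * Y -> R}) (T : {ffun {ffun 'I_n -> X * Y} -> R}) :
  typeII (iid n P) T = \sum_(y : {ffun 'I_n -> Y}) \sum_(x : {ffun 'I_n -> X})
      (\prod_i P (x i, y i)) * T (zp x y).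
Proof.
rewrite /typeII sum_zip exchange_big /=; apply: eq_bigr => y _.
apply: eq_bigr => x _; rewrite ffunE; congr (_ * _).
by apply: eq_bigr => i _; rewrite ffunE.
Qed.

End Zip.

Set Implicit Arguments. Unset Strict Implicit. Unset Printing Implicit Defensive.

Section Point.
Variables (R : realType) (X Y : finType) (PXY : {ffun X * Y -> R}).
Hypothesis hP : is_dist PXY.
Let PX := marginalX PXY.
Variable n : nat.
Implicit Types (x : {ffun 'I_n -> X}) (y : {ffun 'I_n -> Y}).

Lemma expZ M x y : (forall i, PXY (x i, y i) != 0) ->
  expR (\sum_i Zf PXY M (y i) (x i)) * \prod_i PXY (x i, y i) = \prod_i PX (x i).
Proof.
move=> h; rewrite expR_sum -big_split /=; apply: eq_bigr => i _.
have hp : 0 < PXY (x i, y i) by rewrite lt0r h P_ge0.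
have hx : 0 < PX (x i) by apply: lt_le_trans hp (P_le_PX hP _ _).
rewrite /Zf (negbTE (h i)) lnK ?divfK ?h //.
by rewrite posrE divr_gt0.
Qed.

Lemma ptA M x y (s : R) : s <= \sum_i Zf PXY M (y i) (x i) ->
  \prod_i PXY (x i, y i) <= expR (- s) * \prod_i PX (x i).
Proof.
move=> hs.
have hX : 0 <= \prod_i PX (x i) by apply: prodr_ge0 => i _; exact: PX_ge0.
case: (pickP (fun i => PXY (x i, y i) == 0)) => [i /eqP Hi | H].
  rewrite (bigD1 i) //= Hi mul0r; apply: mulr_ge0 => //; exact: expR_ge0.
have H' : forall i, PXY (x i, y i) != 0 by move=> i; rewrite H.
rewrite -(expZ M H') mulrA -expRD.
rewrite -[X in X <= _]mul1r ler_wpM2r ?prodr_ge0 //; first by move=> i _; exact: P_ge0.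
by rewrite -expR0 ler_expR; lra.
Qed.

Lemma ptC M x y (gam tv : R) : (forall i, inS PXY (y i)) -> 0 <= tv <= 1 ->
  expR (- gam) * ((\prod_i PX (x i)) * tv -
     (\prod_i PX (x i)) * (if gam < \sum_i Zf PXY M (y i) (x i) then 1 else 0))
  <= (\prod_i PXY (x i, y i)) * tv.
Proof.
move=> hS /andP[t0 t1].
have hX : 0 <= \prod_i PX (x i) by apply: prodr_ge0 => i _; exact: PX_ge0.
have hPP : 0 <= \prod_i PXY (x i, y i) by apply: prodr_ge0 => i _; exact: P_ge0.
have hE := expR_gt0 (- gam).
case: ifP => [_|/negbT]; rewrite ?mulr1 ?mulr0 ?subr0.
  apply: (@le_trans _ _ 0); last exact: mulr_ge0.
  rewrite pmulr_rle0 //; nra.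
rewrite -leNgt => hg.
case: (pickP (fun i => PX (x i) == 0)) => [i /eqP Hi | H].
  by rewrite (bigD1 i) //= Hi !mul0r mulr0; exact: mulr_ge0.
have H' : forall i, PXY (x i, y i) != 0.
  move=> i; apply/negP => /eqP h0; have := hS i => /forallP/(_ (x i)).
  by rewrite h0 eqxx /= H.
rewrite -(expZ M H') !mulrA -expRD -mulrA ler_piMl ?mulr_ge0 //.
rewrite -expR0 ler_expR; lra.
Qed.

Lemma chebY M (t : R) y : M0 PXY <= M -> 0 < t ->
  \sum_(x : {ffun 'I_n -> X}) (\prod_i PX (x i)) *
    (if t <= `|\sum_i (Zf PXY M (y i) (x i) - gM PXY M (y i))| then 1 else 0)
  <= n%:R * M ^+ 2 / t ^+ 2.
Proof.
move=> hM t0.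
have M0p := M0_ge0 hP.
apply: (@cheb R X n PX (fun i a => Zf PXY M (y i) a - gM PXY M (y i))) => //.
- exact: PX_ge0.
- exact: PX_sum1.
- move=> k; under eq_bigr do rewrite mulrBr.
  rewrite sumrB [X in _ - X](_ : _ = gM PXY M (y k)); first exact: subrr.
  by rewrite -big_distrl /= (PX_sum1 hP) mul1r.
- move=> k a; rewrite ler_norml.
  have := @Zf_ge0 R X Y PXY hP M (y k) a (le_trans M0p hM).
  have := Zf_le hP (y k) a hM.
  have := gM_ge0 hP (y k) (le_trans M0p hM).
  have := gM_le hP (y k) hM.
  move=> *; apply/andP; split; lra.
Qed.

End Point.

Set Implicit Arguments. Unset Strict Implicit. Unset Printing Implicit Defensive.

Section Tests.
Variables (R : realType) (X Y : finType) (PXY : {ffun X * Y -> R}).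
Hypothesis hP : is_dist PXY.
Let PX := marginalX PXY.
Variables (eps : R) (n : nat).
Let F := FPX Y PX n.

Lemma sumPX1 : \sum_(x : {ffun 'I_n -> X}) \prod_i PX (x i) = 1.
Proof. by rewrite (sum_prod (fun i a => PX a)) (PX_sum1 hP) big1. Qed.

Lemma feas_of (T : {ffun {ffun 'I_n -> X * Y} -> R}) :
  (forall y : {ffun 'I_n -> Y},
    \sum_(x : {ffun 'I_n -> X}) (\prod_i PX (x i)) * (1 - T (zp x y)) <= eps) ->
  (typeI F T <= eps%:E)%E.
Proof.
move=> h; apply/ereal_supP => _ [Q [QYn [hQ0 hQ1] <-] <-].
rewrite lee_fin typeI_Q.
apply: (@le_trans _ _ (\sum_(y : {ffun 'I_n -> Y}) QYn y * eps)).
  by apply: ler_sum => y _; apply: ler_wpM2l.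
by rewrite -big_distrl /= hQ1 mul1r.
Qed.

Lemma feas_pt (T : {ffun {ffun 'I_n -> X * Y} -> R}) :
  (typeI F T <= eps%:E)%E -> forall y : {ffun 'I_n -> Y},
    \sum_(x : {ffun 'I_n -> X}) (\prod_i PX (x i)) * (1 - T (zp x y)) <= eps.
Proof.
move=> /ereal_supP h y.
pose Q : {ffun {ffun 'I_n -> Y} -> R} := [ffun y' => if y' == y then 1 else 0].
have hQ : is_dist Q.
  split; first by move=> t; rewrite ffunE; case: ifP.
  rewrite (bigD1 y) //= ffunE eqxx big1 ?addr0 // => t /negbTE ht.
  by rewrite ffunE ht.
pose Qf := [ffun z : {ffun 'I_n -> X * Y} =>
          (\prod_(i < n) PX (z i).1) * Q [ffun i => (z i).2]].
have hF : F Qf by exists Q.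
have : ((\sum_z Qf z * (1 - T z))%:E <= eps%:E)%E by apply: h; exists Qf.
rewrite lee_fin typeI_Q (bigD1 y) //= [X in _ + X]big1 ?addr0.
  by rewrite /Q ffunE eqxx mul1r.
by move=> t /negbTE ht; rewrite /Q ffunE ht mul0r.
Qed.

Definition Ttest (M d : R) : {ffun {ffun 'I_n -> X * Y} -> R} :=
  [ffun z : {ffun 'I_n -> X * Y} => if \sum_i gM PXY M (z i).2 - n%:R * d <= \sum_i Zf PXY M (z i).2 (z i).1
             then 1 else 0].

Lemma Ttest_zp M d x y : Ttest M d (zp x y) =
  if \sum_i gM PXY M (y i) - n%:R * d <= \sum_i Zf PXY M (y i) (x i) then 1 else 0.
Proof.
rewrite ffunE; congr (if _ <= _ then _ else _).
  by congr (_ - _); apply: eq_bigr => i _; rewrite ffunE.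
by apply: eq_bigr => i _; rewrite ffunE.
Qed.

Lemma nbound (M d : R) : 0 < d -> (0 < n)%N ->
  n%:R * M ^+ 2 / (n%:R * d) ^+ 2 = M ^+ 2 / (n%:R * d ^+ 2).
Proof.
move=> d0 n0; have hn : n%:R != 0 :> R by rewrite pnatr_eq0 -lt0n.
have hd : d != 0 by rewrite gt_eqF.
by field; rewrite hn hd.
Qed.

Lemma achiev (M d : R) : M0 PXY <= M -> 0 < d -> (0 < n)%N ->
  M ^+ 2 / (n%:R * d ^+ 2) <= eps ->
  (ereal_inf [set (typeII (iid n PXY) T)%:E |
     T in [set T | is_test T /\ (typeI F T <= eps%:E)%E]]
   <= (expR (n%:R * d) * (\sum_y expR (- gM PXY M y)) ^+ n)%:E)%E.
Proof.
move=> hM d0 n0 hb.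
have nd0 : 0 < n%:R * d by rewrite mulr_gt0 // ltr0n.
have ht : is_test (Ttest M d) by move=> z; rewrite ffunE; case: ifP => _; rewrite ?lexx ?ler01.
have hI : (typeI F (Ttest M d) <= eps%:E)%E.
  apply: feas_of => y.
  apply: (le_trans _ (le_trans (chebY hP y hM nd0) _)); last by rewrite nbound.
  apply: ler_sum => x _; rewrite Ttest_zp; apply: ler_wpM2l.
    by apply: prodr_ge0 => i _; exact: PX_ge0.
  case: ifP => [_|/negbT]; first by rewrite subrr; case: ifP.
  rewrite -ltNge subr0 sumrB => hlt; rewrite ifT //.
  rewrite ler_normr; apply/orP; right; lra.
apply: le_trans (ereal_inf_lbound _) _; first by exists (Ttest M d).
rewrite lee_fin typeII_eq.
apply: (@le_trans _ _ (\sum_(y : {ffun 'I_n -> Y})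
   expR (- (\sum_i gM PXY M (y i) - n%:R * d)))).
  apply: ler_sum => y _.
  apply: (@le_trans _ _ (\sum_(x : {ffun 'I_n -> X})
       expR (- (\sum_i gM PXY M (y i) - n%:R * d)) * \prod_i PX (x i))).
    apply: ler_sum => x _; rewrite Ttest_zp; case: ifP => [h|_].
      by rewrite mulr1; exact: (ptA hP h).
    rewrite mulr0; apply: mulr_ge0; first exact: expR_ge0.
    by apply: prodr_ge0 => i _; exact: PX_ge0.
  by rewrite -big_distrr /= sumPX1 mulr1.
rewrite le_eqVlt; apply/orP; left; apply/eqP.
have -> : (\sum_y expR (- gM PXY M y)) ^+ n = \prod_(i < n) \sum_y expR (- gM PXY M y).
  by rewrite prodr_const card_ord.
rewrite -(sum_prod (fun i a => expR (- gM PXY M a))) big_distrr /=.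
apply: eq_bigr => y _.
by rewrite opprB expRD -sumrN expR_sum.
Qed.

Lemma conv (M d : R) (T : {ffun {ffun 'I_n -> X * Y} -> R}) :
  M0 PXY <= M -> 0 < d -> (0 < n)%N ->
  M ^+ 2 / (n%:R * d ^+ 2) <= (1 - eps) / 2 ->
  is_test T -> (typeI F T <= eps%:E)%E ->
  (1 - eps) / 2 * expR (- (n%:R * d)) *
    (\sum_y (if inS PXY y then expR (- gM PXY M y) else 0)) ^+ n
  <= typeII (iid n PXY) T.
Proof.
move=> hM d0 n0 hb hT hI.
have nd0 : 0 < n%:R * d by rewrite mulr_gt0 // ltr0n.
have hpt := feas_pt hI.
have hPX x : 0 <= \prod_i PX (x i) by apply: prodr_ge0 => i _; exact: PX_ge0.
have hPP x y : 0 <= \prod_i PXY (x i, y i) by apply: prodr_ge0 => i _; exact: P_ge0.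
rewrite typeII_eq.
pose gam (y : {ffun 'I_n -> Y}) := \sum_i gM PXY M (y i) + n%:R * d.
apply: (@le_trans _ _ (\sum_(y : {ffun 'I_n -> Y})
   (if [forall i, inS PXY (y i)] then expR (- gam y) * ((1 - eps) / 2) else 0))); last first.
  apply: ler_sum => y _; case: ifP => [/forallP hS|_]; last first.
    apply: sumr_ge0 => x _; apply: mulr_ge0 => //; by case/andP: (hT (zp x y)).
  apply: (@le_trans _ _ (\sum_(x : {ffun 'I_n -> X}) expR (- gam y) *
     ((\prod_i PX (x i)) * T (zp x y) - (\prod_i PX (x i)) *
       (if gam y < \sum_i Zf PXY M (y i) (x i) then 1 else 0)))); last first.
    by apply: ler_sum => x _; apply: (ptC hP).
  rewrite -big_distrr /= ler_wpM2l ?expR_ge0 // sumrB.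
  have h1 : 1 - eps <= \sum_(x : {ffun 'I_n -> X}) \prod_i PX (x i) * T (zp x y).
    have := hpt y; under eq_bigr do rewrite mulrBr mulr1.
    by rewrite sumrB sumPX1; lra.
  have h2 : \sum_(x : {ffun 'I_n -> X}) \prod_i PX (x i) *
       (if gam y < \sum_i Zf PXY M (y i) (x i) then 1 else 0) <= (1 - eps) / 2.
    apply: le_trans hb; rewrite -nbound //.
    apply: le_trans (chebY hP y hM nd0); apply: ler_sum => x _.
    apply: ler_wpM2l => //; case: ifP => [hlt|_]; last by case: ifP.
    rewrite ifT // ler_normr sumrB; apply/orP; left; move: hlt; rewrite /gam; lra.
  lra.
have -> : \sum_(y : {ffun 'I_n -> Y})
   (if [forall i, inS PXY (y i)] then expR (- gam y) * ((1 - eps) / 2) else 0)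
  = (1 - eps) / 2 * expR (- (n%:R * d)) * \sum_(y : {ffun 'I_n -> Y})
      \prod_i (if inS PXY (y i) then expR (- gM PXY M (y i)) else 0).
  rewrite big_distrr /=; apply: eq_bigr => y _.
  case: ifP => [/forallP hS|/negbT/forallPn[i hi]].
    rewrite (eq_bigr (fun i => expR (- gM PXY M (y i)))); last by move=> i _; rewrite hS.
    rewrite -expR_sum /gam opprD addrC expRD sumrN; lra.
  by rewrite (bigD1 i) //= (negbTE hi) mul0r mulr0.
by rewrite (sum_prod (fun i a => if inS PXY a then expR (- gM PXY M a) else 0)) prodr_const card_ord.
Qed.

End Tests.

Set Implicit Arguments. Unset Strict Implicit. Unset Printing Implicit Defensive.

Section Gibbs.
Variables (R : realType) (X Y : finType) (PXY : {ffun X * Y -> R}).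
Hypothesis hP : is_dist PXY.
Let PX := marginalX PXY.
Let g y := gM PXY 0 y.
Definition ZS := \sum_y (if inS PXY y then expR (- gM PXY 0 y) else 0).

Lemma ZS_gt0 : (exists y, inS PXY y) -> 0 < ZS.
Proof.
move=> [y hy]; rewrite /ZS (bigD1 y) //= hy; apply: ltr_pwDl; first exact: expR_gt0.
by apply: sumr_ge0 => z _; case: ifP => _ //; exact: expR_ge0.
Qed.

Lemma KL_notS (Q : {ffun Y -> R}) y : 0 < Q y -> ~~ inS PXY y ->
  KL (prod_dist PX Q) PXY = +oo%E.
Proof.
move=> hq /forallPn[x]; rewrite negb_imply => /andP[/eqP h0 hx].
rewrite /KL; case: asboolP => // H; exfalso.
have := H (x, y) h0; rewrite /prod_dist ffunE /= => /eqP.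
by rewrite mulf_eq0 (negbTE hx) gt_eqF.
Qed.

Lemma KL_S (Q : {ffun Y -> R}) : is_dist Q -> (forall y, 0 < Q y -> inS PXY y) ->
  KL (prod_dist PX Q) PXY =
  (\sum_y (if Q y == 0 then 0 else Q y * (g y + ln (Q y))))%:E.
Proof.
move=> [Q0 Q1] hS.
have hQ y : Q y != 0 -> 0 < Q y by move=> h; rewrite lt0r h Q0.
rewrite /KL asboolT; last first.
  move=> [x y] h0; rewrite /prod_dist ffunE /=.
  case: (eqVneq (Q y) 0) => [->|/hQ/hS/forallP/(_ x)]; first by rewrite mulr0.
  by rewrite h0 eqxx /= => /eqP ->; rewrite mul0r.
congr EFin.
have -> : \sum_t (if prod_dist PX Q t == 0 then 0
     else prod_dist PX Q t * ln (prod_dist PX Q t / PXY t)) =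
  \sum_x \sum_y (if PX x * Q y == 0 then 0 else PX x * Q y * ln (PX x * Q y / PXY (x, y))).
  by rewrite pair_bigA; apply: eq_bigr => -[x y] _; rewrite /prod_dist ffunE.
rewrite exchange_big /=; apply: eq_bigr => y _.
case: (eqVneq (Q y) 0) => [hq0|hq0].
  by rewrite big1 // => x _; rewrite hq0 mulr0 eqxx.
have qp := hQ _ hq0; have /forallP hy := hS _ qp.
have -> : \sum_x (if PX x * Q y == 0 then 0 else PX x * Q y * ln (PX x * Q y / PXY (x, y)))
   = \sum_x (Q y * (PX x * Zf PXY 0 y x) + Q y * ln (Q y) * PX x).
  apply: eq_bigr => x _.
  have [hx0|hx] := eqVneq (PX x : R) 0; first by rewrite hx0 !mul0r eqxx !mulr0 addr0.
  have px : 0 < PX x by rewrite lt0r hx PX_ge0.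
  have hp : PXY (x, y) != 0.
    by apply/negP => /eqP h0; have := hy x; rewrite h0 eqxx /= (negbTE hx).
  have pp : 0 < PXY (x, y) by rewrite lt0r hp P_ge0.
  rewrite mulf_eq0 (negbTE hx) (negbTE hq0) /= /Zf (negbTE hp).
  have e : ln (PX x * Q y / PXY (x, y)) = ln (PX x / PXY (x, y)) + ln (Q y).
    by rewrite mulrAC [LHS]lnM // posrE ?divr_gt0.
  rewrite e; change (marginalX PXY x) with (PX x); ring.
rewrite big_split /= -big_distrr /= -big_distrr /= (PX_sum1 hP) mulr1.
by rewrite /g /gM -mulrDr.
Qed.

Lemma gibbs_le (Q : {ffun Y -> R}) : (exists y, inS PXY y) ->
  is_dist Q -> (forall y, 0 < Q y -> inS PXY y) ->
  - ln ZS <= \sum_y (if Q y == 0 then 0 else Q y * (g y + ln (Q y))).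
Proof.
move=> hex [Q0 Q1] hS; have Zp := ZS_gt0 hex.
have hQ y : Q y != 0 -> 0 < Q y by move=> h; rewrite lt0r h Q0.
pose r y := expR (- g y) / (Q y * ZS).
have e y : (if Q y == 0 then 0 else Q y * (g y + ln (Q y))) =
    - ln ZS * Q y - (if Q y == 0 then 0 else Q y * ln (r y)).
  case: (eqVneq (Q y) 0) => [->|hq]; first by rewrite !mulr0 subr0.
  have qp := hQ _ hq.
  rewrite /r lnM ?posrE ?invr_gt0 ?mulr_gt0 ?expR_gt0 // lnV ?posrE ?mulr_gt0 //.
  rewrite lnM ?posrE // expRK; ring.
rewrite (eq_bigr _ (fun y _ => e y)) sumrB -big_distrr /= Q1 mulr1 lerBDr gerDl.
have hle : \sum_y (if Q y == 0 then 0 else Q y * ln (r y)) <=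
    \sum_y (if Q y == 0 then 0 else expR (- g y) / ZS - Q y).
  apply: ler_sum => y _; case: (eqVneq (Q y) 0) => [//|hq].
  have qp := hQ _ hq.
  have rp : 0 < r y by rewrite /r divr_gt0 ?mulr_gt0 ?expR_gt0.
  have := @le_ln1Dx R (r y - 1); rewrite addrCA subrr addr0 => /(_ ltac:(lra)) hl.
  apply: (@le_trans _ _ (Q y * (r y - 1))); first by rewrite ler_wpM2l ?Q0.
  rewrite /r le_eqVlt; apply/orP; left; apply/eqP.
  by field; rewrite hq gt_eqF.
apply: le_trans hle _.
have hle2 : \sum_y (if Q y == 0 then 0 else expR (- g y) / ZS - Q y) <=
   \sum_y ((if inS PXY y then expR (- g y) / ZS else 0) - Q y).
  apply: ler_sum => y _; case: (eqVneq (Q y) 0) => [->|hq].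
    rewrite subr0; case: ifP => _ //; apply: divr_ge0; [exact: expR_ge0|exact: ltW].
  by rewrite (hS _ (hQ _ hq)).
apply: le_trans hle2 _.
rewrite sumrB Q1 subr_le0.
have -> : \sum_y (if inS PXY y then expR (- g y) / ZS else 0) = ZS / ZS.
  rewrite /ZS big_distrl /=; apply: eq_bigr => y _; case: ifP => _ //; by rewrite mul0r.
by rewrite divff // gt_eqF.
Qed.

Definition Qstar : {ffun Y -> R} :=
  [ffun y => if inS PXY y then expR (- gM PXY 0 y) / ZS else 0].

Lemma Qstar_dist : (exists y, inS PXY y) -> is_dist Qstar.
Proof.
move=> hex; have Zp := ZS_gt0 hex; split.
  move=> y; rewrite ffunE; case: ifP => _ //; apply: divr_ge0; [exact: expR_ge0|exact: ltW].
rewrite -(@divff _ ZS (lt0r_neq0 Zp)) /ZS big_distrl /=; apply: eq_bigr => y _.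
by rewrite ffunE; case: ifP => _ //; rewrite mul0r.
Qed.

Lemma Qstar_S y : 0 < Qstar y -> inS PXY y.
Proof. by rewrite ffunE; case: ifP => // _; rewrite ltxx. Qed.

Lemma Qstar_val : (exists y, inS PXY y) ->
  \sum_y (if Qstar y == 0 then 0 else Qstar y * (g y + ln (Qstar y))) = - ln ZS.
Proof.
move=> hex; have Zp := ZS_gt0 hex; have [_ Q1] := Qstar_dist hex.
rewrite -[RHS]mulr1 -Q1 big_distrr /=; apply: eq_bigr => y _.
case: (eqVneq (Qstar y) 0) => [->|hq]; first by rewrite mulr0.
have : inS PXY y by move: hq; rewrite ffunE; case: ifP => //; rewrite eqxx.
move=> hy; rewrite ffunE hy lnM ?posrE ?invr_gt0 ?expR_gt0 // lnV ?posrE // expRK.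
rewrite /g; ring.
Qed.

Lemma umlaut_fin : (exists y, inS PXY y) -> umlaut PXY = (- ln ZS)%:E.
Proof.
move=> hex; apply/eqP; rewrite eq_le; apply/andP; split.
  apply: le_trans (ereal_inf_lbound _) _; first by exists Qstar => //; exact: Qstar_dist.
  by rewrite KL_S ?Qstar_val //; [exact: Qstar_dist|exact: Qstar_S].
apply/ereal_infP => _ [Q hQ <-].
case: (pickP (fun y => (0 < Q y) && ~~ inS PXY y)) => [y /andP[h1 h2]|H].
  by rewrite (KL_notS h1 h2) leey.
have hS y : 0 < Q y -> inS PXY y by move=> h; have := H y; rewrite h /= => /negbFE.
by rewrite KL_S // lee_fin gibbs_le.
Qed.

Lemma umlaut_inf : (forall y, ~~ inS PXY y) -> umlaut PXY = +oo%E.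
Proof.
move=> hn; apply/eqP; rewrite eq_le leey /=; apply/ereal_infP => _ [Q [Q0 Q1] <-].
case: (pickP (fun y => 0 < Q y)) => [y hy|H].
  by rewrite (KL_notS hy (hn y)).
exfalso; move: Q1; rewrite big1 => [/eqP|y _]; first by rewrite eq_sym oner_eq0.
by apply/eqP; rewrite eq_le Q0 andbT leNgt H.
Qed.

End Gibbs.

Set Implicit Arguments. Unset Strict Implicit. Unset Printing Implicit Defensive.

Section PerN.
Variables (R : realType) (X Y : finType) (PXY : {ffun X * Y -> R}).
Hypothesis hP : is_dist PXY.
Let PX := marginalX PXY.
Variables (eps : R) (n : nat).

Let beta := ereal_inf [set (typeII (iid n PXY) T)%:E |
                         T in [set T | is_test T /\ (typeI (FPX Y PX n) T <= eps%:E)%E]].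

Lemma DH_eq : DH eps (FPX Y PX n) (iid n PXY) =
  (if beta == 0 then +oo else - (ln (fine beta))%:E)%E.
Proof. by []. Qed.

Lemma beta_ge0 : (0 <= beta)%E.
Proof.
apply/ereal_infP => _ [T [hT _] <-]; rewrite lee_fin.
apply: sumr_ge0 => z _; apply: mulr_ge0; last by case/andP: (hT z).
by rewrite ffunE; apply: prodr_ge0 => i _; exact: P_ge0.
Qed.

Definition ZM (M : R) := \sum_y expR (- gM PXY M y).

Lemma ZM_gt0 M : (exists y : Y, True) -> 0 < ZM M.
Proof.
move=> [y _]; rewrite /ZM (bigD1 y) //=; apply: ltr_pwDl; first exact: expR_gt0.
by apply: sumr_ge0 => z _; exact: expR_ge0.
Qed.

Lemma lowDH M d : (exists y : Y, True) -> M0 PXY <= M -> 0 < d -> (0 < n)%N ->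
  M ^+ 2 / (n%:R * d ^+ 2) <= eps ->
  ((- d - ln (ZM M))%:E <= (n%:R^-1)%:E * DH eps (FPX Y PX n) (iid n PXY))%E.
Proof.
move=> hy hM d0 n0 hb.
have Zp := ZM_gt0 M hy.
have np : 0 < n%:R :> R by rewrite ltr0n.
have hup := achiev hP hM d0 n0 hb; rewrite -/beta in hup.
have b0 := beta_ge0.
rewrite DH_eq; case: ifP => [_|/negbT bn0].
  by rewrite gt0_muley ?leey // lte_fin invr_gt0.
move: hup b0 bn0; case: beta => [r| |] //= hup b0 bn0.
rewrite lee_fin in hup; have {}b0 : 0 <= r by rewrite -lee_fin.
change (\sum_y expR (- gM PXY M y)) with (ZM M) in hup.
have rp : 0 < r by rewrite lt0r b0 andbT; apply: contra bn0 => /eqP ->.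
rewrite -EFinM lee_fin.
have hb' : 0 < expR (n%:R * d) * ZM M ^+ n by rewrite mulr_gt0 ?expR_gt0 ?exprn_gt0.
have : ln r <= ln (expR (n%:R * d) * ZM M ^+ n) by rewrite ler_ln ?posrE.
rewrite lnM ?posrE ?expR_gt0 ?exprn_gt0 // expRK lnXn // => hl.
rewrite -mulr_natl in hl; rewrite mulrC ler_pdivlMr //; nra.
Qed.

Lemma finDH M d : 0 < eps -> eps < 1 -> (exists y, inS PXY y) -> M0 PXY <= M -> 0 < d -> (0 < n)%N ->
  M ^+ 2 / (n%:R * d ^+ 2) <= eps ->
  M ^+ 2 / (n%:R * d ^+ 2) <= (1 - eps) / 2 ->
  exists r : R, ((n%:R^-1)%:E * DH eps (FPX Y PX n) (iid n PXY))%E = r%:E /\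
    - d - ln (ZM M) <= r /\ r <= d - ln (ZS PXY) - ln ((1 - eps) / 2) / n%:R.
Proof.
move=> heps0 heps1 hex hM d0 n0 hb1 hb2.
have hy : exists y : Y, True by case: hex => y _; exists y.
have Zp := ZM_gt0 M hy.
have ZSp := ZS_gt0 hex.
have np : 0 < n%:R :> R by rewrite ltr0n.
have cp : 0 < (1 - eps) / 2 by lra.
have hup := achiev hP hM d0 n0 hb1; rewrite -/beta in hup.
have ZSe : \sum_y (if inS PXY y then expR (- gM PXY M y) else 0) = ZS PXY.
  by apply: eq_bigr => y _; case: ifP => // hs; rewrite (gS M hs).
pose a := (1 - eps) / 2 * expR (- (n%:R * d)) * (ZS PXY) ^+ n.
have ap : 0 < a by rewrite /a mulr_gt0 ?exprn_gt0 // mulr_gt0 // expR_gt0.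
have hlo : (a%:E <= beta)%E.
  apply/ereal_infP => _ [T [hT hI] <-]; rewrite lee_fin /a -ZSe.
  exact: (conv hP hM d0 n0 hb2 hT hI).
have hlb : ln a = ln ((1 - eps) / 2) - n%:R * d + n%:R * ln (ZS PXY).
  have e1 := expR_gt0 (- (n%:R * d)).
  rewrite /a lnM ?posrE; last 2 first.
  - exact: mulr_gt0.
  - exact: exprn_gt0.
  rewrite lnM ?posrE // expRK lnXn // -mulr_natl; ring.
rewrite DH_eq; move: hup hlo; case: beta => [r| |] //= hup hlo.
rewrite lee_fin in hup hlo.
change (\sum_y expR (- gM PXY M y)) with (ZM M) in hup.
have rp : 0 < r by exact: lt_le_trans ap hlo.
rewrite ifF; last by apply/negbTE; rewrite eqe gt_eqF.
exists (n%:R^-1 * - ln r); split; first by rewrite EFinM.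
have hb' : 0 < expR (n%:R * d) * ZM M ^+ n by rewrite mulr_gt0 ?expR_gt0 ?exprn_gt0.
have : ln r <= ln (expR (n%:R * d) * ZM M ^+ n) by rewrite ler_ln ?posrE.
rewrite lnM ?posrE ?expR_gt0 ?exprn_gt0 // expRK lnXn // => hl.
have : ln a <= ln r by rewrite ler_ln ?posrE.
rewrite hlb => hl2.
set L := ln r in hl hl2 *.
set u := ln (ZS PXY) in hl2 *.
set z := ln (ZM M) in hl *.
set c := ln ((1 - eps) / 2) in hl2 *.
rewrite -mulr_natl in hl.
have ninv : n%:R^-1 * n%:R = 1 :> R by rewrite mulVf // gt_eqF.
have e1 : n%:R^-1 * - L = - L / n%:R by rewrite mulrC.
rewrite e1; split.
  rewrite ler_pdivlMr //; nra.
rewrite ler_pdivrMr //.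
have -> : (d - u - c / n%:R) * n%:R = d * n%:R - u * n%:R - c by field; rewrite gt_eqF.
nra.
Qed.

End PerN.

Set Implicit Arguments. Unset Strict Implicit. Unset Printing Implicit Defensive.

Lemma exN (R : realType) (a w : R) : 0 < w ->
  exists N, forall n, (N <= n)%N -> a / n%:R <= w.
Proof.
move=> w0; exists (Num.trunc (`|a| / w)).+1 => n hn.
have h1 := truncnS_gt (`|a| / w).
have h2 : (Num.trunc (`|a| / w)).+1%:R <= n%:R :> R by rewrite ler_nat.
have hx : `|a| / w < n%:R by exact: lt_le_trans h1 h2.
have np : 0 < n%:R :> R.
  apply: le_lt_trans hx; apply: divr_ge0 => //; exact: ltW.
rewrite ler_pdivrMr //; move: hx; rewrite ltr_pdivrMr // => hx.
apply: le_trans (ler_norm a) _; rewrite mulrC; exact: ltW.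
Qed.

Section Final.
Variables (R : realType) (X Y : finType) (PXY : {ffun X * Y -> R}).
Hypothesis hP : is_dist PXY.

Definition rest (M : R) := \sum_y (if inS PXY y then 0 else expR (- gM PXY M y)).

Lemma ZM_split M : ZM PXY M = ZS PXY + rest M.
Proof.
rewrite /ZM /ZS /rest -big_split /=; apply: eq_bigr => y _.
case: ifP => hs; last by rewrite add0r.
by rewrite addr0 (gS M hs).
Qed.

Lemma chooseM (w : R) : 0 < w -> exists M, M0 PXY <= M /\ rest M <= w.
Proof.
move=> w0; have c0 := cmin_gt0 PXY; have m0 := M0_ge0 hP.
pose k : R := #|Y|%:R.
exists (M0 PXY + `|ln k - ln w| / cmin PXY); split.
  by rewrite lerDl divr_ge0 // ltW.
set M := _ + _.
have M0p : 0 <= M by rewrite addr_ge0 // divr_ge0 // ltW.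
apply: (@le_trans _ _ (\sum_(y : Y) expR (- (cmin PXY * M)))).
  apply: ler_sum => y _; case: ifP => hs; first exact: expR_ge0.
  rewrite ler_expR lerN2; apply: g_notS => //; by rewrite hs.
rewrite sumr_const -mulr_natl -/k.
have [k0|kp] : k = 0 \/ 0 < k.
  by rewrite /k; case: #|Y| => [|m]; [left|right; rewrite ltr0n].
  by rewrite k0 mul0r ltW.
have hcm : ln k - ln w <= cmin PXY * M.
  rewrite /M mulrDr mulrCA mulfV ?mulr1 ?gt_eqF //.
  apply: le_trans (ler_norm _) _; rewrite lerDr; apply: mulr_ge0 => //; exact: ltW.
apply: (@le_trans _ _ (k * expR (ln w - ln k))).
  by apply: ler_wpM2l; [exact: ltW|rewrite ler_expR; lra].
by rewrite expRD expRN !lnK ?posrE // mulrCA divff ?mulr1 // gt_eqF.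
Qed.

End Final.

Set Implicit Arguments. Unset Strict Implicit. Unset Printing Implicit Defensive.

Lemma resc (R : realType) (M d : R) (n : nat) : 0 < d -> (0 < n)%N ->
  M ^+ 2 / d ^+ 2 / n%:R = M ^+ 2 / (n%:R * d ^+ 2).
Proof.
move=> d0 n0; have hn : n%:R != 0 :> R by rewrite pnatr_eq0 -lt0n.
by field; rewrite hn gt_eqF.
Qed.

Unset Implicit Arguments. Set Strict Implicit.
Theorem mainTheorem4 (R : realType) (X Y : finType) (PXY : {ffun X * Y -> R})
  (hP : is_dist PXY) (eps : R) (heps0 : 0 < eps) (heps1 : eps < 1) :
  ((fun n : nat => ((n%:R)^-1)%:E * DH eps (FPX Y (marginalX PXY) n) (iid n PXY))%E
     @ \oo --> umlaut PXY).
Proof.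
have hy : exists y : Y, True.
  case: (pickP (fun y : Y => true)) => [y _|H]; first by exists y.
  case: hP => _; rewrite big1 => [/eqP|[x y] _]; first by rewrite eq_sym oner_eq0.
  by have := H y.
set f := fun n : nat => _.
have cp : 0 < (1 - eps) / 2 by lra.
case: (boolP [exists y, inS PXY y]) => [/existsP hex|/existsPn hn].
  rewrite (umlaut_fin hP hex).
  have ZSp := ZS_gt0 hex.
  set u := - ln (ZS PXY).
  have key : forall d, 0 < d -> exists N, forall n, (N <= n)%N ->
      exists r, f n = r%:E /\ u - 2 * d <= r <= u + 2 * d.
    move=> d d0.
    have [M [hM hr]] := chooseM hP (mulr_gt0 ZSp d0).
    have [N1 h1] := exN (M ^+ 2 / d ^+ 2) heps0.
    have [N2 h2] := exN (M ^+ 2 / d ^+ 2) cp.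
    have [N3 h3] := exN (- ln ((1 - eps) / 2)) d0.
    exists (maxn (maxn N1 N2) (maxn N3 1)) => n.
    rewrite !geq_max => /andP[/andP[n1 n2] /andP[n3 n0]].
    have := h1 _ n1; have := h2 _ n2; have := h3 _ n3; rewrite !resc // => b3 b2 b1.
    have [r [fr /andP[r1 r2]]] : exists r, f n = r%:E /\ (- d - ln (ZM PXY M) <= r) &&
           (r <= d - ln (ZS PXY) - ln ((1 - eps) / 2) / n%:R).
      have [r [fr [r1 r2]]] := finDH hP heps0 heps1 hex hM d0 n0 b1 b2.
      by exists r; rewrite r1 r2.
    exists r; split => //.
    have hZ : ln (ZM PXY M) <= ln (ZS PXY) + d.
      rewrite ZM_split.
      have hZ1 : ZS PXY + rest PXY M <= ZS PXY * (1 + d) by nra.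
      have hrp : 0 <= rest PXY M.
        by apply: sumr_ge0 => y _; case: ifP => _ //; exact: expR_ge0.
      apply: le_trans (_ : ln (ZS PXY * (1 + d)) <= _).
        by rewrite ler_ln ?posrE ?mulr_gt0 //; lra.
      rewrite lnM ?posrE //; last by lra.
      by rewrite lerD2l; apply: le_ln1Dx; lra.
    move: b3; rewrite mulNr => b3.
    rewrite /u; apply/andP; split; lra.
  apply/fine_cvgP; split.
    have [N hN] := key 1 ltr01.
    exists N => // n /= hnN; case: (hN n hnN) => r [fr _]; by rewrite fr.
  apply/cvgrPdist_lt => e e0.
  have [N hN] := key (e / 4) (divr_gt0 e0 (ltr0n _ 4)).
  exists N => // n /= hnN; case: (hN n hnN) => r [fr /andP[r1 r2]]; rewrite fr.
  rewrite /=; rewrite ltr_norml; apply/andP; split; lra.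
have hn' : forall y, ~~ inS PXY y by move=> y; exact: hn.
rewrite (umlaut_inf hn').
apply/cvgeyPge => A.
have [M [hM hr]] := chooseM hP (expR_gt0 (- (A + 1))).
have [N1 h1] := exN (M ^+ 2) heps0.
exists (maxn N1 1) => // n /= hn1.
move: hn1; rewrite geq_max => /andP[n1 n0].
have b1 : M ^+ 2 / (n%:R * 1 ^+ 2) <= eps by rewrite -resc // expr1n divr1; exact: h1.
have := lowDH hP hy hM ltr01 n0 b1.
have hZS : ZS PXY = 0 by apply: big1 => y _; rewrite (negbTE (hn' y)).
rewrite ZM_split hZS add0r.
have hrp : 0 < rest PXY M by have := ZM_gt0 PXY M hy; rewrite ZM_split hZS add0r.
have : ln (rest PXY M) <= - (A + 1) by rewrite -[X in _ <= X]expRK ler_ln ?posrE ?expR_gt0.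
move=> hl; apply: le_trans; rewrite lee_fin; lra.
Qed.
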